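(* Let $g(z)=z^3-z^2+7z+1$, $s_1=0.275$, $s_2=2.75$, $\mathbb{C}_L=\{z:\Re z\le0\}$, $\mathbb{C}_R=\{z:\Re z>0\}$, and let $D(z_0,r)$ denote the open disc of radius $r$ centered at $z_0$. Then: (1) For all $z_0\in\mathbb{C}$ with $|z_0|=1$ and sufficiently small $\varepsilon>0$, $g(z)-z_0$ has exactly one root in $D_1=(\mathbb{C}_L\cap D(0,s_1))\cup D(0,\varepsilon)$. (2) For all $z_0\in\mathbb{C}$ with $|z_0|=1$ and sufficiently small $\varepsilon>0$, $g(z)-z_0$ has exactly two roots in $D_2=(\mathbb{C}_R\cap D(0,s_2))\setminus D(0,\varepsilon)$. (3) For all $z_0\in\mathbb{C}$ with $|z_0|=1$, $g(z)-z_0$ has no roots in $D_3=\mathbb{C}_L\setminus D(0,s_1)$. (4) For all $z_0\in\mathbb{C}$ with $|z_0|=1$, $g(z)-z_0$ has no roots in $D_4=\mathbb{C}_R\setminus D(0,s_2)$. *)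

(* Defs.v *)
From HB Require Import structures.
From mathcomp Require Import all_boot all_order all_algebra.
From mathcomp Require Import reals.
From mathcomp.real_closed Require Import complex.
Set Implicit Arguments. Unset Strict Implicit. Unset Printing Implicit Defensive.
Import Order.TTheory GRing.Theory Num.Theory.
Local Open Scope ring_scope.

Definition gpoly (R : realType) : {poly R[i]} :=
  'X^3 - 'X^2 + (7%:R)%:P * 'X + 1.

Definition s1 (R : realType) : R := 11%:R / 40%:R.
Definition s2 (R : realType) : R := 11%:R / 4%:R.

Definition CL (R : realType) : pred R[i] := fun z => complex.Re z <= 0.
Definition CR (R : realType) : pred R[i] := fun z => 0 < complex.Re z.
Definition disc0 (R : realType) (r : R) : pred R[i] := fun z => `|z| < (r%:C)%C.

Definition D1 (R : realType) (eps : R) : pred R[i] :=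
  fun z => (CL z && disc0 (s1 R) z) || disc0 eps z.
Definition D2 (R : realType) (eps : R) : pred R[i] :=
  fun z => (CR z && disc0 (s2 R) z) && ~~ disc0 eps z.
Definition D3 (R : realType) : pred R[i] := fun z => CL z && ~~ disc0 (s1 R) z.
Definition D4 (R : realType) : pred R[i] := fun z => CR z && ~~ disc0 (s2 R) z.

(* The (monic) polynomial p has exactly k roots in D, counted with
   multiplicity: p splits as prod (X - x) over the multiset s of its roots
   and exactly k elements of s lie in D. (The multiset s is unique.) *)
Definition nroots_in (R : realType) (D : pred R[i]) (p : {poly R[i]}) (k : nat) :=
  exists s : seq R[i], p = \prod_(x <- s) ('X - x%:P) /\ count D s = k.

(* Main.v *)
Require Import Defs.
From HB Require Import structures.
From mathcomp Require Import all_boot all_order all_algebra.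
From mathcomp Require Import reals.
From mathcomp.real_closed Require Import complex.
From mathcomp Require Import ring lra.
Import Order.TTheory GRing.Theory Num.Theory.
Local Open Scope ring_scope.

Definition gre {R : realType} (x y : R) := x^+3 - 3*x*y^+2 - x^+2 + y^+2 + 7*x + 1.
Definition gim {R : realType} (x y : R) := 3*x^+2*y - y^+3 - 2*x*y + 7*y.
Definition Qp {R : realType} (x Rr : R) :=
  8*x^+3 + (28*Rr - 4)*x^+2 + (14 - 20*Rr - 2*Rr^+2)*x + Rr^+3 - 13*Rr^+2 + 51*Rr.

Lemma Fid {R : realType} (x y : R) :
  gre x y ^+2 + gim x y ^+2 - 1 = Qp x (x^+2 + y^+2).
Proof. rewrite /gre /gim /Qp; ring. Qed.

Lemma Ha {R : realType} (t r : R) : 0 <= t -> t <= r -> r <= 1/2 ->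
  0 <= 8*(t^+2+t*r+r^+2) - (28*r^+2-4)*(t+r) + 14 - 20*r^+2 - 2*r^+4.
Proof. move=> h1 h2 h4.
have h5 : 0 <= r by lra.
have h6 : r^+2 <= 1/4 by nra.
have h7 : r^+2 * t <= r^+3 by rewrite exprS; nra.
have h8 : r^+3 <= 1/8 by rewrite exprS; nra.
have h9 : r^+4 <= 1/16 by rewrite (exprS _ 3); nra.
nra. Qed.

Lemma Hb {R : realType} (r : R) : 11/40 <= r -> 0 < r^+3 + r^+2 + 7*r - 2.
Proof. move=> h. have h2 : (11/40)^+2 <= r^+2 by nra.
have h3 : (11/40)^+3 <= r^+3 by rewrite !exprS expr0 !mulr1; nra. nra. Qed.

Lemma P3c {R : realType} (t r : R) : 0 <= t -> t <= r -> 1 <= r ->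
  0 < -8*t^+3 + (28*r^+2 - 4)*t^+2 - (14 - 20*r^+2 - 2*r^+4)*t + r^+6 - 13*r^+4 + 51*r^+2.
Proof. move=> h1 h2 h3.
have e0 : t <= r^+2 by nra.
have e1 : 0 <= (r^+2 - t) * t^+2 by apply: mulr_ge0; nra.
have e2 : 1 <= r^+2 by nra.
have e3 : 0 <= r^+2 * (r^+2 - 1) by apply: mulr_ge0; nra.
have e7 : 0 < r^+2 * ((2*r^+2 - 13)^+2 + 35).
  apply: mulr_gt0; first nra. have := sqr_ge0 (2*r^+2 - 13). lra.
have e6 : 4*(r^+6 - 13*r^+4 + 51*r^+2) = r^+2 * ((2*r^+2 - 13)^+2 + 35) by ring.
have e8 : 0 <= (20*r^+2 - 4)*t^+2 by apply: mulr_ge0; nra.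
have e9 : 0 <= (20*r^+2 + 2*r^+4 - 14)*t by apply: mulr_ge0; nra.
nra. Qed.

Lemma P3d {R : realType} (t r : R) : 0 <= t -> t <= r -> 1/2 <= r -> r <= 1 ->
  0 < -8*t^+3 + (28*r^+2 - 4)*t^+2 - (14 - 20*r^+2 - 2*r^+4)*t + r^+6 - 13*r^+4 + 51*r^+2.
Proof. move=> h1 h2 h3 h4.
have e1 : 0 <= r^+3 - t^+3.
  have -> : r^+3 - t^+3 = (r - t) * (r^+2 + r*t + t^+2) by ring.
  apply: mulr_ge0; nra.
have e2 : t^+2 <= r^+2 by nra.
have e3 : 0 <= (28*r^+2)*t^+2 by apply: mulr_ge0; nra.
have e4 : 0 <= (20*r^+2 + 2*r^+4)*t by apply: mulr_ge0; nra.
have e5 : 0 < r * (r^+5 - 13*r^+3 +47*r - 8*r^+2 - 14).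
  apply: mulr_gt0; first lra.
  have f1 : 0 <= r^+5 by apply: exprn_ge0; lra.
  have f2 : r^+3 <= r^+2 by rewrite exprS; nra.
  have f3 : r^+2 <= r by nra.
  nra.
have e6 : r^+6 - 13*r^+4 + 51*r^+2 - 8*r^+3 - 4*r^+2 - 14*r = r * (r^+5 - 13*r^+3 +47*r - 8*r^+2 - 14) by ring.
nra. Qed.

Lemma P3r {R : realType} (x y : R) : x <= 0 -> (11/40)^+2 <= x^+2 + y^+2 ->
  1 < gre x y ^+2 + gim x y ^+2.
Proof.
move=> hx hr.
suff : 0 < Qp x (x^+2 + y^+2) by rewrite -Fid; lra.
have r0 : 0 <= Num.sqrt (x^+2 + y^+2) := sqrtr_ge0 _.
have r2 : Num.sqrt (x^+2 + y^+2) ^+2 = x^+2 + y^+2.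
  by rewrite sqr_sqrtr // addr_ge0 // sqr_ge0.
move: r0 r2 hr; set r := Num.sqrt _ => r0 r2 hr.
rewrite -r2.
have t0 : 0 <= - x by lra.
have tr2 : (- x)^+2 <= r^+2 by rewrite r2 sqrrN; have := sqr_ge0 y; lra.
move: t0 tr2; set t := - x => t0 tr2.
have -> : x = - t by rewrite /t opprK.
have tr : t <= r by nra.
have r1 : 11/40 <= r by nra.
have -> : Qp (-t) (r^+2) = -8*t^+3 + (28*r^+2 - 4)*t^+2 - (14 - 20*r^+2 - 2*r^+4)*t + r^+6 - 13*r^+4 + 51*r^+2 by rewrite /Qp; ring.
case: (lerP r (1/2)) => h1.
  have -> : -8*t^+3 + (28*r^+2 - 4)*t^+2 - (14 - 20*r^+2 - 2*r^+4)*t + r^+6 - 13*r^+4 + 51*r^+2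
    = r*(r^+2+r+7)*(r^+3+r^+2+7*r-2) + (r - t) * (8*(t^+2+t*r+r^+2) - (28*r^+2-4)*(t+r) + 14 - 20*r^+2 - 2*r^+4) by ring.
  have k1 : 0 < r*(r^+2+r+7)*(r^+3+r^+2+7*r-2).
    apply: mulr_gt0; [apply: mulr_gt0; [lra|nra] | exact: Hb].
  have k2 : 0 <= (r - t) * (8*(t^+2+t*r+r^+2) - (28*r^+2-4)*(t+r) + 14 - 20*r^+2 - 2*r^+4).
    apply: mulr_ge0; [lra | exact: Ha].
  lra.
case: (lerP r 1) => h2.
  apply: P3d => //; lra.
apply: P3c => //; lra.
Qed.

Lemma Q0pos {R : realType} (x : R) : 0 <= x -> 0 < Qp x ((11/4)^+2).
Proof. move=> hx. rewrite /Qp.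
have h1 := sqr_ge0 (x - 293/500).
have h2 : 0 <= (x - 293/500)^+2 * x by apply: mulr_ge0.
nra. Qed.

Lemma Gpos {R : realType} (x S : R) : 0 <= x -> 0 <= S ->
  0 < 28*x^+2 - 20*x + 51 - (2*x+13)*((11/4)^+2 + S+(11/4)^+2) + ((11/4)^+2 + S)^+2 + ((11/4)^+2 + S)*(11/4)^+2 + ((11/4)^+2)^+2.
Proof. move=> hx hS. have h1 := sqr_ge0 (S - x). have h2 := sqr_ge0 (x - 201/216). nra. Qed.

Lemma Qshift {R : realType} (x R0 S : R) :
  Qp x (R0 + S) = Qp x R0 + S * (28*x^+2 - 20*x + 51 - (2*x+13)*(R0 + S+R0) + (R0 + S)^+2 + (R0 + S)*R0 + R0^+2).
Proof. rewrite /Qp; ring. Qed.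

Lemma P4r {R : realType} (x y : R) : 0 <= x -> (11/4)^+2 <= x^+2 + y^+2 ->
  1 < gre x y ^+2 + gim x y ^+2.
Proof.
move=> hx hr.
suff : 0 < Qp x (x^+2 + y^+2) by rewrite -Fid; lra.
have S0 : 0 <= x^+2 + y^+2 - (11/4)^+2 by lra.
move: S0; set S := _ - _ => S0.
have -> : x^+2 + y^+2 = (11/4)^+2 + S by rewrite /S; lra.
rewrite Qshift.
have := Q0pos x hx. have g := Gpos x S hx S0.
have := mulr_ge0 S0 (ltW g). lra.
Qed.

Lemma P6r {R : realType} (x y : R) : 0 < x -> x^+2 + y^+2 <= 8/5 ->
  1 < gre x y ^+2 + gim x y ^+2.
Proof.
move=> h1 h2.
have U : 0 < x * (7 - x + x^+2 - 3 * y^+2) + y^+2 by nra.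
have -> : gre x y = 1 + (x * (7 - x + x^+2 - 3 * y^+2) + y^+2) by rewrite /gre; ring.
have := sqr_ge0 (gim x y). nra.
Qed.

Lemma ReM {R : realType} (z w : R[i]) : complex.Re (z * w) = complex.Re z * complex.Re w - complex.Im z * complex.Im w.
Proof. by case: z => a b; case: w => c d. Qed.
Lemma ImM {R : realType} (z w : R[i]) : complex.Im (z * w) = complex.Re z * complex.Im w + complex.Im z * complex.Re w.
Proof. by case: z => a b; case: w => c d. Qed.
Lemma ReD {R : realType} (z w : R[i]) : complex.Re (z + w) = complex.Re z + complex.Re w.
Proof. by case: z => a b; case: w => c d. Qed.
Lemma ImD {R : realType} (z w : R[i]) : complex.Im (z + w) = complex.Im z + complex.Im w.
Proof. by case: z => a b; case: w => c d. Qed.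
Lemma ReN {R : realType} (z : R[i]) : complex.Re (- z) = - complex.Re z.
Proof. by case: z => a b. Qed.
Lemma ImN {R : realType} (z : R[i]) : complex.Im (- z) = - complex.Im z.
Proof. by case: z => a b. Qed.
Lemma Ren {R : realType} (n : nat) : complex.Re (n%:R : R[i]) = n%:R.
Proof. by rewrite -(rmorph_nat (real_complex R)). Qed.
Lemma Imn {R : realType} (n : nat) : complex.Im (n%:R : R[i]) = 0.
Proof. by rewrite -(rmorph_nat (real_complex R)). Qed.
Lemma Re1 {R : realType} : complex.Re (1 : R[i]) = 1. Proof. by []. Qed.
Lemma Im1 {R : realType} : complex.Im (1 : R[i]) = 0. Proof. by []. Qed.

Lemma g_re {R : realType} (z : R[i]) :
  complex.Re (gpoly R).[z] = gre (complex.Re z) (complex.Im z).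
Proof.
rewrite /gpoly /gre !hornerE !exprS !expr0 !mulr1 /=.
rewrite !(ReD, ImD, ReN, ImN, ReM, ImM, Ren, Imn, Re1, Im1). ring.
Qed.
Lemma g_im {R : realType} (z : R[i]) :
  complex.Im (gpoly R).[z] = gim (complex.Re z) (complex.Im z).
Proof.
rewrite /gpoly /gim !hornerE !exprS !expr0 !mulr1 /=.
rewrite !(ReD, ImD, ReN, ImN, ReM, ImM, Ren, Imn, Re1, Im1). ring.
Qed.

Definition nsq {R : realType} (z : R[i]) := complex.Re z ^+2 + complex.Im z ^+2.

Lemma nsq_ge0 {R : realType} (z : R[i]) : 0 <= nsq z.
Proof. by rewrite /nsq addr_ge0 // sqr_ge0. Qed.

Lemma nsqM {R : realType} (z w : R[i]) : nsq (z * w) = nsq z * nsq w.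
Proof. rewrite /nsq ReM ImM; ring. Qed.

Lemma disc0E {R : realType} (r : R) (z : R[i]) : 0 < r -> disc0 r z = (nsq z < r^+2).
Proof.
move=> hr; rewrite /disc0 normc_def ltcR -/(nsq z).
have e : (Num.sqrt (nsq z) < r) = (Num.sqrt (nsq z) < Num.sqrt (r^+2)).
  by rewrite sqrtr_sqr ger0_norm // ltW.
by rewrite e ltr_sqrt // exprn_gt0.
Qed.

Lemma norm1 {R : realType} (z0 : R[i]) : `|z0| = 1 -> nsq z0 = 1.
Proof.
move=> h. have : ((nsq z0)%:C)%C = ((1 : R)%:C)%C by rewrite /nsq add_Re2_Im2 h expr1n.
by move/complexI.
Qed.

Lemma on_circle {R : realType} (z0 z : R[i]) : `|z0| = 1 -> root (gpoly R - z0%:P) z ->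
  gre (complex.Re z) (complex.Im z) ^+2 + gim (complex.Re z) (complex.Im z) ^+2 = 1.
Proof.
move=> /norm1 h; rewrite rootE hornerD hornerN hornerC subr_eq0 => /eqP e.
by rewrite -g_re -g_im e.
Qed.

Lemma classify {R : realType} (z0 z : R[i]) : `|z0| = 1 -> root (gpoly R - z0%:P) z ->
  (complex.Re z <= 0 /\ nsq z < (11/40)^+2) \/
  (0 < complex.Re z /\ 8/5 < nsq z /\ nsq z < (11/4)^+2).
Proof.
move=> h1 h2; have := on_circle _ _ h1 h2; rewrite /nsq.
set x := complex.Re z; set y := complex.Im z => e.
case: (lerP x 0) => hx.
  left; split => //.
  case: (ltrP (x^+2 + y^+2) ((11/40)^+2)) => // h.
  by have := P3r _ _ hx h; lra.
right; split => //.
case: (ltrP (8/5) (x^+2 + y^+2)) => h.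
  split => //.
  case: (ltrP (x^+2 + y^+2) ((11/4)^+2)) => // h'.
  by have := P4r _ _ (ltW hx) h'; lra.
by have := P6r _ _ hx h; lra.
Qed.


Lemma p_eval {R : realType} (z0 t : R[i]) :
  (gpoly R - z0%:P).[t] = t^+3 - t^+2 + 7%:R * t + 1 - z0.
Proof. by rewrite /gpoly !hornerE. Qed.

Lemma p_split {R : realType} (z0 : R[i]) :
  gpoly R - z0%:P = 'X^3 + (- 'X^2 + (7%:R)%:P * 'X + (1 - z0)%:P).
Proof. rewrite /gpoly polyCB polyC1. ring. Qed.

Lemma p_rest_size (F : nzRingType) (c d : F) :
  (size ((- 'X^2 + c%:P * 'X + d%:P)%R : {poly F}) < 4)%N.
Proof.
apply: (leq_ltn_trans (size_polyD _ _)); rewrite gtn_max; apply/andP; split.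
  apply: (leq_ltn_trans (size_polyD _ _)); rewrite gtn_max size_polyN size_polyXn /=.
  apply: (leq_ltn_trans (size_polyMleq _ _)); rewrite size_polyX.
  have := size_polyC_leq1 c. case: (size _) => [|[|n]] //.
by apply: (leq_ltn_trans (size_polyC_leq1 _)).
Qed.

Lemma p_lead (F : nzRingType) (c d : F) :
  lead_coef ('X^3 + (- 'X^2 + c%:P * 'X + d%:P)) = 1 /\ size ('X^3 + (- 'X^2 + c%:P * 'X + d%:P)) = 4.
Proof.
split; first by rewrite lead_coefDl ?lead_coefXn ?size_polyXn ?p_rest_size.
by rewrite size_polyDl ?size_polyXn ?p_rest_size.
Qed.

Lemma vieta (F : comNzRingType) (a b c z0 : F) :
  (forall t, t^+3 - t^+2 + 7%:R * t + 1 - z0 = (t - a) * ((t - b) * ((t - c) * 1))) ->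
  [/\ a * b * c = z0 - 1, 2%:R * (a + b + c - 1) = 0 & 2%:R * (a*b + b*c + c*a - 7%:R) = 0].
Proof.
move=> E.
have id t : t^+3 - t^+2 + 7%:R * t + 1 - z0 - (t - a) * ((t - b) * ((t - c) * 1))
   = (a + b + c - 1) * t^+2 + (7%:R - (a*b + b*c + c*a)) * t + (1 - z0 + a*b*c) by ring.
have Z t : (a + b + c - 1) * t^+2 + (7%:R - (a*b + b*c + c*a)) * t + (1 - z0 + a*b*c) = 0.
  by rewrite -id E subrr.
move: (Z 0) (Z 1) (Z (-1)).
rewrite expr0n /= !mulr0 !add0r expr1n !mulr1 sqrrN expr1n !mulr1 !mulrN1.
set K := a + b + c - 1; set L := 7%:R - _; set M := 1 - z0 + _.
move=> hM h1 h2.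
split.
- apply/eqP; rewrite -subr_eq0; apply/eqP.
  have -> : a * b * c - (z0 - 1) = M by rewrite /M; ring.
  exact: hM.
- have -> : 2%:R * K = (K + L + M) + (K + - L + M) - 2%:R * M by ring.
  by rewrite h1 h2 hM mulr0 !addr0 subrr.
- have -> : 2%:R * (a*b + b*c + c*a - 7%:R) = (K + - L + M) - (K + L + M) by rewrite /L; ring.
  by rewrite h1 h2 subrr.
Qed.

Lemma roots3 {R : realType} (z0 : R[i]) : exists a b c : R[i],
  gpoly R - z0%:P = \prod_(x <- [:: a; b; c]) ('X - x%:P) /\
  a + b + c = 1 /\ a*b + b*c + c*a = 7%:R /\ a*b*c = z0 - 1.
Proof.
have [s Ds] := closed_field_poly_normal (gpoly R - z0%:P).
have [lc sz] : lead_coef (gpoly R - z0%:P) = 1 /\ size (gpoly R - z0%:P) = 4.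
  by rewrite p_split; apply: p_lead.
rewrite lc scale1r in Ds.
have := size_prod_XsubC s id; rewrite -Ds sz.
case: s Ds => [|a [|b [|c [|d s]]]] //= Ds _.
exists a, b, c; split => //.
have E t : t^+3 - t^+2 + 7%:R * t + 1 - z0 = (t - a) * ((t - b) * ((t - c) * 1)).
  by rewrite -p_eval Ds !big_cons big_nil !hornerE.
have [h3 h1 h2] := @vieta _ _ _ _ _ E.
split; [|split => //].
  by move/eqP: h1; rewrite mulf_eq0 pnatr_eq0 /= subr_eq0 => /eqP.
by move/eqP: h2; rewrite mulf_eq0 pnatr_eq0 /= subr_eq0 => /eqP.
Qed.

Lemma pair7_gen (F : comNzRingType) (a b c : F) : a + b + c = 1 -> a*b + b*c + c*a = 7%:R ->
  a + b - a^+2 - a*b - b^+2 = 7%:R.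
Proof.
move=> h1 h2. have hc : c = 1 - a - b by rewrite -h1; ring.
rewrite -h2 hc; ring.
Qed.

Lemma two_small {R : realType} (a b : R[i]) : a + b - a^+2 - a*b - b^+2 = 7%:R ->
  nsq a < (11/40)^+2 -> nsq b < (11/40)^+2 -> False.
Proof.
move=> /(congr1 (@complex.Re R)); rewrite !expr2 !(ReD, ReN, ReM, Ren) /nsq.
set xa := complex.Re a; set ya := complex.Im a; set xb := complex.Re b; set yb := complex.Im b.
move=> e ha hb.
have k1 : xa < 1/2 by nra.
have k2 : xb < 1/2 by nra.
have k3 : xa * xb <= 1/4 by nra.
nra.
Qed.

Lemma small_exists {R : realType} (a b c z0 : R[i]) : nsq z0 = 1 -> a*b*c = z0 - 1 ->
  [|| nsq a <= 8/5, nsq b <= 8/5 | nsq c <= 8/5].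
Proof.
move=> hz e.
have e1 : nsq a * nsq b * nsq c = nsq (z0 - 1) by rewrite -e !nsqM.
have e2 : nsq (z0 - 1) = 2 - 2 * complex.Re z0.
  move: hz; rewrite /nsq ReD ImD ReN ImN Re1 Im1 => hz; lra.
have e3 : -1 <= complex.Re z0.
  move: hz; rewrite /nsq => hz. have := sqr_ge0 (complex.Im z0). nra.
have ga := nsq_ge0 a; have gb := nsq_ge0 b; have gc := nsq_ge0 c.
apply/negPn/negP; rewrite !negb_or -!ltNge => /and3P [ha hb hc].
have p1 : 64/25 < nsq a * nsq b by nra.
have p2 : 512/125 < nsq a * nsq b * nsq c by nra.
lra.
Qed.

Lemma D12 {R : realType} (z0 z : R[i]) (eps : R) : `|z0| = 1 -> root (gpoly R - z0%:P) z ->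
  0 < eps -> eps < s1 R ->
  D1 eps z = (complex.Re z <= 0) /\ D2 eps z = (0 < complex.Re z).
Proof.
move=> hz hr he1 he2.
have s1v : s1 R = 11/40 by [].
have s2v : s2 R = 11/4 by [].
rewrite s1v in he2.
rewrite /D1 /D2 /CL /CR s1v s2v !disc0E //; try lra.
case: (classify _ _ hz hr) => [[h1 h2]|[h1 [h2 h3]]].
  rewrite h1 h2 /=; split => //.
  by rewrite ltNge h1.
have e1 : eps^+2 < nsq z by nra.
rewrite h1 h3 /= leNgt h1 /=.
by rewrite ltNge (ltW e1); split.
Qed.

Lemma pair7_perm (F : comNzRingType) (a b c : F) : a + b + c = 1 -> a*b + b*c + c*a = 7%:R ->
  [/\ a + b - a^+2 - a*b - b^+2 = 7%:R, a + c - a^+2 - a*c - c^+2 = 7%:R &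
      b + c - b^+2 - b*c - c^+2 = 7%:R].
Proof.
move=> h1 h2; split.
- exact: (@pair7_gen _ a b c h1 h2).
- apply: (@pair7_gen _ a c b); [rewrite -h1 | rewrite -h2]; ring.
- apply: (@pair7_gen _ b c a); [rewrite -h1 | rewrite -h2]; ring.
Qed.

Lemma counts {R : realType} (z0 : R[i]) (eps : R) : `|z0| = 1 -> 0 < eps -> eps < s1 R ->
  exists a b c : R[i], gpoly R - z0%:P = \prod_(x <- [:: a; b; c]) ('X - x%:P) /\
    count (D1 eps) [:: a; b; c] = 1 /\ count (D2 eps) [:: a; b; c] = 2.
Proof.
move=> hz he1 he2.
have [a [b [c [Dp [h1 [h2 h3]]]]]] := roots3 z0.
exists a, b, c; split => //.
have rt z : z \in [:: a; b; c] -> root (gpoly R - z0%:P) z by rewrite Dp root_prod_XsubC.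
have ra : root (gpoly R - z0%:P) a by apply: rt; rewrite !inE eqxx.
have rb : root (gpoly R - z0%:P) b by apply: rt; rewrite !inE eqxx orbT.
have rc : root (gpoly R - z0%:P) c by apply: rt; rewrite !inE eqxx !orbT.
have [Da Ea] := D12 z0 a eps hz ra he1 he2.
have [Db Eb] := D12 z0 b eps hz rb he1 he2.
have [Dc Ec] := D12 z0 c eps hz rc he1 he2.
rewrite /= Da Ea Db Eb Dc Ec !ltNge.
have cls z : root (gpoly R - z0%:P) z -> complex.Re z <= 0 -> nsq z < (11/40)^+2.
  move=> hr hre; case: (classify _ _ hz hr) => [[_ ->]//|[h _]]; lra.
have sml z : root (gpoly R - z0%:P) z -> nsq z <= 8/5 -> complex.Re z <= 0.
  move=> hr hn; case: (classify _ _ hz hr) => [[-> _]//|[_ [h _]]]; lra.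
have [pab pac pbc] := @pair7_perm _ _ _ _ h1 h2.
have nab : ~~ ((complex.Re a <= 0) && (complex.Re b <= 0)).
  apply/negP => /andP [ha hb]; exact: (two_small _ _ pab (cls a ra ha) (cls b rb hb)).
have nac : ~~ ((complex.Re a <= 0) && (complex.Re c <= 0)).
  apply/negP => /andP [ha hc]; exact: (two_small _ _ pac (cls a ra ha) (cls c rc hc)).
have nbc : ~~ ((complex.Re b <= 0) && (complex.Re c <= 0)).
  apply/negP => /andP [hb hc]; exact: (two_small _ _ pbc (cls b rb hb) (cls c rc hc)).
have ex : [|| complex.Re a <= 0, complex.Re b <= 0 | complex.Re c <= 0].
  case/or3P: (small_exists _ _ _ _ (norm1 _ hz) h3) => hn.
  - by rewrite (sml a ra hn).
  - by rewrite (sml b rb hn) orbT.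
  - by rewrite (sml c rc hn) !orbT.
move: nab nac nbc ex.
by case: (complex.Re a <= 0); case: (complex.Re b <= 0); case: (complex.Re c <= 0).
Qed.

Theorem lemma3p5 (R : realType) :
  (forall z0 : R[i], `|z0| = 1 ->
     exists e0 : R, 0 < e0 /\ forall eps : R, 0 < eps -> eps < e0 ->
       nroots_in (D1 eps) (gpoly R - z0%:P) 1) /\
  (forall z0 : R[i], `|z0| = 1 ->
     exists e0 : R, 0 < e0 /\ forall eps : R, 0 < eps -> eps < e0 ->
       nroots_in (D2 eps) (gpoly R - z0%:P) 2) /\
  (forall z0 : R[i], `|z0| = 1 ->
     forall z : R[i], D3 z -> ~~ root (gpoly R - z0%:P) z) /\
  (forall z0 : R[i], `|z0| = 1 ->
     forall z : R[i], D4 z -> ~~ root (gpoly R - z0%:P) z).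
Proof.
have s1p : 0 < s1 R by rewrite /s1; lra.
split.
  move=> z0 hz; exists (s1 R); split => // eps he1 he2.
  have [a [b [c [Dp [c1 c2]]]]] := counts _ _ hz he1 he2.
  by exists [:: a; b; c].
split.
  move=> z0 hz; exists (s1 R); split => // eps he1 he2.
  have [a [b [c [Dp [c1 c2]]]]] := counts _ _ hz he1 he2.
  by exists [:: a; b; c].
split.
  move=> z0 hz z /andP [hL hD]; apply/negP => hr.
  move: hD; rewrite disc0E // -leNgt => hD.
  have s1v : s1 R = 11/40 by [].
  rewrite s1v in hD; rewrite /CL in hL.
  case: (classify _ _ hz hr) => [[_ h]|[h _]]; lra.
move=> z0 hz z /andP [hR hD]; apply/negP => hr.
have s2p : 0 < s2 R by rewrite /s2; lra.
move: hD; rewrite disc0E // -leNgt => hD.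
have s2v : s2 R = 11/4 by [].
rewrite s2v in hD; rewrite /CR in hR.
case: (classify _ _ hz hr) => [[h _]|[_ [_ h]]]; lra.
Qed.
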